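(* Let $x\in\mathbb{R}^{n}$ with $x\ge0$ entrywise, $x\ne0$, and $\mathbf{1}^{T}x\le\|x\|^{2}$. Then $\mathbf{1}^{T}\left(I-xx^{T}/\|x\|^{2}\right)\mathbf{1}\ge\|(\mathbf{1}-x)_{+}\|^{2}$.
   Context: $\mathbf{1}$ is the all-ones vector in $\mathbb{R}^{n}$ and $(v)_{+}=\max\{0,v\}$ entrywise. *)

(* Defs.v *)
From mathcomp Require Import all_boot all_order all_algebra.
Set Implicit Arguments. Unset Strict Implicit. Unset Printing Implicit Defensive.
Import Order.TTheory GRing.Theory Num.Theory.
Local Open Scope ring_scope.

Definition ones (R : realFieldType) (n : nat) : 'cV[R]_n := const_mx 1.
Definition sqnorm (R : realFieldType) (n : nat) (x : 'cV[R]_n) : R := (x^T *m x) 0 0.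
Definition pos_part (R : realFieldType) (n : nat) (v : 'cV[R]_n) : 'cV[R]_n :=
  map_mx (fun a => Num.max 0 a) v.

(* Main.v *)
Require Import Defs.
From mathcomp Require Import all_boot all_order all_algebra.
From mathcomp Require Import ring lra.
Import Order.TTheory GRing.Theory Num.Theory.
Local Open Scope ring_scope.

Theorem lemma20 (R : realFieldType) (n : nat) (x : 'cV[R]_n) :
  (forall i, 0 <= x i 0) ->
  x != 0 ->
  ((ones R n)^T *m x) 0 0 <= sqnorm x ->
  ((ones R n)^T *m (1%:M - (sqnorm x)^-1 *: (x *m x^T)) *m ones R n) 0 0
    >= sqnorm (pos_part (ones R n - x)).
Proof.
move=> x0 xn0 hsq.
set s := \sum_i x i 0.
set q := \sum_i x i 0 ^+ 2.
have hs : ((ones R n)^T *m x) 0 0 = s.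
  by rewrite mxE; apply: eq_bigr => i _; rewrite !mxE mul1r.
have hs' : (x^T *m ones R n) 0 0 = s.
  by rewrite mxE; apply: eq_bigr => i _; rewrite !mxE mulr1.
have hq : sqnorm x = q.
  by rewrite /sqnorm mxE; apply: eq_bigr => i _; rewrite !mxE expr2.
have hn : ((ones R n)^T *m ones R n) 0 0 = n%:R.
  rewrite mxE (eq_bigr (fun _ => 1)); last by move=> i _; rewrite !mxE mulr1.
  by rewrite sumr_const card_ord.
have qpos : 0 < q.
  have [i hi] : exists i, x i 0 != 0.
    apply/existsP; move: xn0; apply: contraR; rewrite negb_exists => /forallP h.
    apply/eqP/matrixP => i j; rewrite ord1 mxE; apply/eqP; exact: negbNE (h i).
  rewrite /q (bigD1 i) //=; apply: ltr_wpDr.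
    by apply: sumr_ge0 => k _; exact: sqr_ge0.
  by rewrite exprn_gt0 // lt0r hi x0.
rewrite hq in hsq *.
have -> : ((ones R n)^T *m (1%:M - q^-1 *: (x *m x^T)) *m ones R n) 0 0
    = n%:R - q^-1 * s ^+ 2.
  rewrite mulmxBr mulmx1 mulmxBl -scalemxAr -scalemxAl.
  rewrite !mxE -hn; congr (_ - _); first by rewrite [RHS]mxE.
  congr (_ * _).
  transitivity (((ones R n)^T *m (x *m x^T) *m ones R n) 0 0); first by rewrite [RHS]mxE.
  by rewrite !mulmxA -(mulmxA _ x^T) [LHS]mxE big_ord1 hs hs' expr2.
rewrite hs in hsq.
have s0 : 0 <= s by apply: sumr_ge0.
set t := s / q.
have t0 : 0 <= t by rewrite divr_ge0 // ltW.
have t1 : t <= 1 by rewrite ler_pdivrMr // mul1r.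
have -> : n%:R - q^-1 * s ^+ 2 = \sum_i (1 - t * x i 0) ^+ 2.
  rewrite (eq_bigr (fun i => 1 - ((2 * t) * x i 0 - t ^+ 2 * x i 0 ^+ 2)));
    last by move=> i _; ring.
  rewrite sumrB sumrB -!mulr_sumr sumr_const card_ord -/s -/q /t.
  by field; rewrite gt_eqF.
rewrite /sqnorm mxE; apply: ler_sum => i _.
rewrite !mxE -expr2.
have xi := x0 i.
rewrite /Num.max /Num.Def.maxr /=.
case: ifP => h; last by rewrite expr0n /= sqr_ge0.
have d : 0 <= x i 0 * (1 - t) by rewrite mulr_ge0 // subr_ge0.
have h' : 0 < 1 - x i 0 by rewrite h.
have e : 0 <= x i 0 * (1 - t) * ((1 - x i 0) + (1 - t * x i 0)).
  by rewrite mulr_ge0 // addr_ge0 ?ltW //; nra.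
rewrite -subr_ge0; move: e; rewrite !expr2; nra.
Qed.
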